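(* Let $G=(V,E)$ be a Generalized Bartlett graph with $|V|=p$, and let $\sigma$ be a Generalized Bartlett ordering for $G$. Suppose $\Omega\in\mathbb{P}_{G_\sigma}$ follows a generalized $G$-Wishart distribution with parameters $U$ and $\boldsymbol\delta$, where $U$ is positive definite and $\delta_i>0$ for all $i$. Let $\Omega=LDL^T$ be the modified Cholesky decomposition and define $\widetilde D_1=D_1$, $\widetilde D_k=D_k/D_{k-1}$ for $k\ge2$. Then (i) for every independent entry $L_{ij}$ ($i>j$, $(i,j)\in E_\sigma$), the conditional distribution of $L_{ij}$ given all other entries of $L_I$ and $\widetilde D=(\widetilde D_1,\dots,\widetilde D_p)$ is univariate normal; (ii) for every $k$, the conditional distribution of $\widetilde D_k$ given $L_I$ and $\{\widetilde D_{k'}\}_{k'\neq k}$ is either a Generalized Inverse Gaussian or a Gamma distribution.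
   Context: For an undirected graph $G=(V,E)$ with $|V|=p$ and an ordering $\sigma$ (a bijection $V\to\{1,\dots,p\}$), the ordered graph $G_\sigma$ has vertex set $\{1,\dots,p\}$ and edge set $E_\sigma=\{(i,j):(\sigma^{-1}(i),\sigma^{-1}(j))\in E\}$. $\mathbb{P}_{G_\sigma}$ is the set of $p\times p$ symmetric positive definite $\Omega$ with $\Omega_{ij}=0$ for $i\ne j$, $(i,j)\notin E_\sigma$. Modified Cholesky: $\Omega=LDL^T$, $L$ unit lower triangular, $D=\mathrm{diag}(D_1,\dots,D_p)$, $D_i>0$. $L_I=\{L_{ij}:i>j,(i,j)\in E_\sigma\}$; $\Omega\mapsto(L_I,D)$ is a bijection $\mathbb{P}_{G_\sigma}\to\mathbb{R}^{|L_I|}\times(0,\infty)^p$. The generalized $G$-Wishart distribution with parameters $U,\boldsymbol\delta$ has density on $\mathbb{P}_{G_\sigma}$ proportional to $\prod_i D_i^{\delta_i/2}\exp(-\tfrac12\mathrm{tr}(\Omega U))$ (Lebesgue measure on free entries of $\Omega$). Triangulation: given $\sigma$, set $E^\sigma_0=E$ and for $i=1,\dots,p-2$ let $E^\sigma_i=E^\sigma_{i-1}\cup\{\{u,v\}: u\ne v,\ \sigma(u)>i,\ \sigma(v)>i,\ \{u,\sigma^{-1}(i)\}\in E^\sigma_{i-1},\ \{v,\sigma^{-1}(i)\}\in E^\sigma_{i-1}\}$; put $D^\sigma(E)=E^\sigma_{p-2}$. $G$ is a Generalized Bartlett graph if there is an ordering $\sigma$ (a Generalized Bartlett ordering) such that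 there are no vertices $u,v,w$ with $\{u,v\},\{v,w\},\{u,w\}\notin E$ but $\{u,v\},\{v,w\},\{u,w\}\in D^\sigma(E)$. A Generalized Inverse Gaussian distribution on $(0,\infty)$ has density proportional to $x^{\alpha}\exp(-a x-b/x)$ with $a,b>0$. *)

(* Defs.v *)
From HB Require Import structures.
From mathcomp Require Import all_boot all_order all_algebra all_fingroup.
From mathcomp Require Import all_classical all_reals all_analysis.
Set Implicit Arguments. Unset Strict Implicit. Unset Printing Implicit Defensive.
Import Order.TTheory GRing.Theory Num.Theory.
Local Open Scope ring_scope.

(* Triangulation E^sigma_n (0-based step counter):
   fill_iter 0 = E, and step k.+1 (the paper's step i = k+1) eliminates the vertex
   w with sigma w = k (0-based, i.e. sigma^{-1}(i) 1-based) and joins every two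
   distinct neighbours u, v of w with sigma u, sigma v > k (0-based, i.e. > i 1-based). *)
Fixpoint fill_iter (V : finType) (p : nat) (sigma : V -> 'I_p) (E : rel V) (n : nat)
  : rel V :=
  match n with
  | 0 => E
  | k.+1 =>
      let Ek := fill_iter sigma E k in
      fun u v => Ek u v ||
        [&& u != v, (k < sigma u)%N, (k < sigma v)%N &
            [exists w, [&& (sigma w == k :> nat), Ek u w & Ek v w]]]
  end.

Definition Dsig (V : finType) (p : nat) (sigma : V -> 'I_p) (E : rel V) : rel V :=
  fill_iter sigma E (p - 2).

Definition GB_ordering (V : finType) (p : nat) (sigma : V -> 'I_p) (E : rel V) : Prop :=
  ~ exists u v w : V,
      [&& ~~ E u v, ~~ E v w, ~~ E u w,
          Dsig sigma E u v, Dsig sigma E v w & Dsig sigma E u w].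

Definition GB_graph (V : finType) (p : nat) (E : rel V) : Prop :=
  exists sigma : V -> 'I_p, bijective sigma /\ GB_ordering sigma E.

Definition Esig (V : finType) (p : nat) (sigma : V -> 'I_p) (E : rel V) : rel 'I_p :=
  fun i j => [exists u, exists v, [&& sigma u == i, sigma v == j & E u v]].

Definition freeL (V : finType) (p : nat) (sigma : V -> 'I_p) (E : rel V) (i j : 'I_p)
  : bool := (j < i)%N && Esig sigma E i j.

Definition posdef (R : realType) (p : nat) (A : 'M[R]_p) : Prop :=
  A^T = A /\ forall v : 'cV[R]_p, v != 0 -> 0 < (v^T *m A *m v) 0 0.

Definition PG (R : realType) (V : finType) (p : nat) (sigma : V -> 'I_p) (E : rel V)
  (Om : 'M[R]_p) : Prop :=
  posdef Om /\ forall i j : 'I_p, i != j -> ~~ Esig sigma E i j -> Om i j = 0.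

(* D_k = Dtilde_1 * ... * Dtilde_k *)
Definition Dof (R : realType) (p : nat) (dt : 'I_p -> R) (k : 'I_p) : R :=
  \prod_(m < p | (m <= k)%N) dt m.

(* Column-by-column completion of the unit lower triangular L: free entries are
   taken from x, the other sub-diagonal entries are forced by Omega_ij = 0. *)
Fixpoint Lstep (R : realType) (p : nat) (F : rel 'I_p) (x : 'I_p -> 'I_p -> R)
  (D : 'I_p -> R) (n : nat) : 'I_p -> 'I_p -> R :=
  match n with
  | 0 => fun i j => if i == j then 1 else 0
  | n'.+1 =>
      let L := Lstep F x D n' in
      fun i j =>
        if (nat_of_ord j == n') && (j < i)%N then
          (if F i j then x i j
           else - (\sum_(k < p | (k < j)%N) L i k * D k * L j k) / D j)
        else L i j
  end.

Definition Lmat (R : realType) (V : finType) (p : nat) (sigma : V -> 'I_p) (E : rel V)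
  (x : 'I_p -> 'I_p -> R) (dt : 'I_p -> R) : 'M[R]_p :=
  \matrix_(i, j) Lstep (Esig sigma E) x (Dof dt) p i j.

Definition Omega_of (R : realType) (V : finType) (p : nat) (sigma : V -> 'I_p)
  (E : rel V) (x : 'I_p -> 'I_p -> R) (dt : 'I_p -> R) : 'M[R]_p :=
  Lmat sigma E x dt *m diag_mx (\row_k Dof dt k) *m (Lmat sigma E x dt)^T.

Definition Cidx (p : nat) : finType := ('I_p * 'I_p + 'I_p)%type.

(* active coordinates: inl (i,j) <-> L_ij in L_I ; inr k <-> Dtilde_k.
   Same index set for the free entries of Omega: inl (i,j) <-> Omega_ij (i>j edge),
   inr k <-> Omega_kk. *)
Definition active (V : finType) (p : nat) (sigma : V -> 'I_p) (E : rel V)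
  (c : Cidx p) : bool :=
  match c with inl ij => freeL sigma E ij.1 ij.2 | inr _ => true end.

Definition updL (R : realType) (p : nat) (x : 'I_p -> 'I_p -> R) (i j : 'I_p) (t : R) :=
  fun a b => if (a == i) && (b == j) then t else x a b.

Definition updD (R : realType) (p : nat) (dt : 'I_p -> R) (k : 'I_p) (t : R) :=
  fun a => if a == k then t else dt a.

Definition coord_upd (R : realType) (p : nat)
  (y : ('I_p -> 'I_p -> R) * ('I_p -> R)) (c : Cidx p) (t : R) :=
  match c with
  | inl ij => (updL y.1 ij.1 ij.2 t, y.2)
  | inr k => (y.1, updD y.2 k t)
  end.

Definition coord_val (R : realType) (p : nat)
  (y : ('I_p -> 'I_p -> R) * ('I_p -> R)) (c : Cidx p) : R :=
  match c with inl ij => y.1 ij.1 ij.2 | inr k => y.2 k end.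

Definition out_val (R : realType) (p : nat) (Om : 'M[R]_p) (c : Cidx p) : R :=
  match c with inl ij => Om ij.1 ij.2 | inr k => Om k k end.

Definition detF (R : realType) (T : finType) (M : T -> T -> R) : R :=
  \sum_(s : {perm T}) (-1) ^+ s * \prod_(a : T) M a (s a).

Definition jac (R : realType) (V : finType) (p : nat) (sigma : V -> 'I_p) (E : rel V)
  (y : ('I_p -> 'I_p -> R) * ('I_p -> R))
  (a b : {c : Cidx p | active sigma E c}) : R :=
  derive1 (fun t => out_val (Omega_of sigma E (coord_upd y (val b) t).1
                                      (coord_upd y (val b) t).2) (val a))
    (coord_val y (val b)).

(* Unnormalised joint density of (L_I, Dtilde) induced by the generalized
   G-Wishart density  prod_i D_i^{delta_i/2} exp(-tr(Omega U)/2)  on P_{G_sigma}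
   (Lebesgue measure on the free entries of Omega), via change of variables. *)
Definition gw_density (R : realType) (V : finType) (p : nat) (sigma : V -> 'I_p)
  (E : rel V) (U : 'M[R]_p) (delta : 'I_p -> R)
  (y : ('I_p -> 'I_p -> R) * ('I_p -> R)) : R :=
  (\prod_(k < p) (Dof y.2 k) `^ (delta k / 2))
  * expR (- (\tr (Omega_of sigma E y.1 y.2 *m U)) / 2)
  * `| detF (@jac R V p sigma E y) |.

(* Main.v *)
Require Import Defs.
From HB Require Import structures.
From mathcomp Require Import all_boot all_order all_algebra all_fingroup.
From mathcomp Require Import all_classical all_reals all_analysis.
Import Order.TTheory GRing.Theory Num.Theory.
Local Open Scope ring_scope.
From mathcomp Require Import zify ring lra.

Module Helpers.
Set Implicit Arguments. Unset Strict Implicit. Unset Printing Implicit Defensive.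
Section LA.
Variables (R : realType) (p : nat) (F : rel 'I_p).

Lemma Lstep_early (x : 'I_p -> 'I_p -> R) D n (i j : 'I_p) : (n <= j)%N ->
  Lstep F x D n i j = if i == j then 1 else 0.
Proof.
elim: n => [//|n IH] Hn /=.
have -> : (nat_of_ord j == n) = false by apply/eqP => E; rewrite E ltnn in Hn.
by rewrite /= IH // ltnW.
Qed.

Lemma Lstep_stable (x : 'I_p -> 'I_p -> R) D n (i j : 'I_p) : (j < n)%N ->
  Lstep F x D n i j = Lstep F x D j.+1 i j.
Proof.
elim: n => [//|n IH] Hn.
case: (eqVneq (nat_of_ord j) n) => [<-//|Hjn].
simpl; rewrite (negbTE Hjn) /= IH //.
by move: Hn; rewrite ltnS leq_eqVlt (negbTE Hjn).
Qed.

Definition Lf (x : 'I_p -> 'I_p -> R) D := Lstep F x D p.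

Lemma Lf_rec x D (i j : 'I_p) : Lf x D i j =
  if i == j then 1 else if (j < i)%N then
    (if F i j then x i j
     else - (\sum_(k < p | (k < j)%N) Lf x D i k * D k * Lf x D j k) / D j)
  else 0.
Proof.
rewrite /Lf Lstep_stable //= eqxx /=.
case: (eqVneq i j) => [->|Hij]; first by rewrite ltnn Lstep_early // eqxx.
case: ifP => Hji; last by rewrite Lstep_early // (negbTE Hij).
case: (F i j) => //; congr (- _ / _).
apply: eq_bigr => k Hk.
by rewrite (Lstep_stable x D (n:=j) i) // (Lstep_stable x D (n:=j) j) // (Lstep_stable x D (n:=p) i) // (Lstep_stable x D (n:=p) j).
Qed.

Lemma Lf_diag x D (i : 'I_p) : Lf x D i i = 1.
Proof. by rewrite Lf_rec eqxx. Qed.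

Lemma Lf_up x D (i j : 'I_p) : (i < j)%N -> Lf x D i j = 0.
Proof.
move=> H; rewrite Lf_rec; have -> : (i == j) = false.
  by apply/negbTE; rewrite neq_ltn H.
by rewrite ltnNge ltnW.
Qed.

End LA.

Section Graph.
Variables (V : finType) (p : nat) (sigma : V -> 'I_p) (E : rel V).
Hypothesis sinj : injective sigma.

Lemma fill_mono1 n u v : fill_iter sigma E n u v -> fill_iter sigma E n.+1 u v.
Proof. by move=> H /=; rewrite H. Qed.

Lemma fill_mono n n' u v : (n <= n')%N ->
  fill_iter sigma E n u v -> fill_iter sigma E n' u v.
Proof.
move=> /subnKC <-; elim: (n' - n)%N => [|k IH]; first by rewrite addn0.
by move=> H; rewrite addnS; apply: fill_mono1; apply: IH.
Qed.

Lemma fill_stage n u w : fill_iter sigma E n u w ->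
  fill_iter sigma E (minn n (sigma w)) u w.
Proof.
elim: n => [|n IH] H; first by rewrite min0n.
case: (leqP (sigma w) n) => Hw.
  rewrite (minn_idPr (leqW Hw)).
  case/orP: H => [/IH|/and4P [_ _ Hw' _]]; first by rewrite (minn_idPr Hw).
  by rewrite ltnNge Hw in Hw'.
by rewrite (minn_idPl Hw).
Qed.

Definition Fill (a b : 'I_p) : bool :=
  [exists u, exists v, [&& sigma u == a, sigma v == b & Dsig sigma E u v]].

Lemma fill_tri u v w : (sigma w < sigma v)%N -> (sigma v < sigma u)%N ->
  Dsig sigma E u w -> Dsig sigma E v w -> Dsig sigma E u v.
Proof.
move=> Hwv Hvu; rewrite /Dsig => /fill_stage Hu /fill_stage Hv.
have Hm : (sigma w < p - 2)%N.
  have := ltn_ord (sigma u); move: Hwv Hvu; lia.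
rewrite (minn_idPr (ltnW Hm)) in Hu Hv.
apply: (fill_mono (n := (sigma w).+1)) => //=.
apply/orP; right; apply/and4P; split.
- by apply/eqP => E0; move: Hvu; rewrite E0 ltnn.
- exact: ltn_trans Hwv Hvu.
- exact: Hwv.
- by apply/existsP; exists w; rewrite eqxx Hu Hv.
Qed.

Lemma Fill_tri (a b m : 'I_p) : (m < b)%N -> (b < a)%N ->
  Fill a m -> Fill b m -> Fill a b.
Proof.
move=> Hmb Hba /existsP [u /existsP [w /and3P [/eqP Hu /eqP Hw H1]]].
move=> /existsP [v /existsP [w' /and3P [/eqP Hv /eqP Hw' H2]]].
have ew : w' = w by apply: sinj; rewrite Hw Hw'.
subst w'.
apply/existsP; exists u; apply/existsP; exists v; rewrite Hu Hv !eqxx /=.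
by apply: (fill_tri (w := w)); rewrite ?Hu ?Hv ?Hw.
Qed.

Lemma Esig_Fill a b : Esig sigma E a b -> Fill a b.
Proof.
move=> /existsP [u /existsP [v /and3P [H1 H2 H3]]].
apply/existsP; exists u; apply/existsP; exists v; rewrite H1 H2 /=.
exact: (fill_mono (n := 0)).
Qed.

Lemma GB_contra (a b m : 'I_p) : GB_ordering sigma E ->
  ~~ Esig sigma E a b -> ~~ Esig sigma E a m -> ~~ Esig sigma E b m ->
  Fill a b -> Fill a m -> Fill b m -> False.
Proof.
move=> GB Nab Nam Nbm.
move=> /existsP [u /existsP [v /and3P [/eqP Hu /eqP Hv H1]]].
move=> /existsP [u' /existsP [w /and3P [/eqP Hu' /eqP Hw H2]]].
move=> /existsP [v' /existsP [w' /and3P [/eqP Hv' /eqP Hw' H3]]].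
have eu : u' = u by apply: sinj; rewrite Hu Hu'.
have ev : v' = v by apply: sinj; rewrite Hv Hv'.
have ew : w' = w by apply: sinj; rewrite Hw Hw'.
subst u' v' w'.
apply: GB; exists u, v, w; rewrite H1 H2 H3 !andbT.
have NE : forall a b u v, sigma u = a -> sigma v = b -> ~~ Esig sigma E a b -> ~~ E u v.
  move=> a' b' u' v' Ha Hb; apply: contra => Huv.
  by apply/existsP; exists u'; apply/existsP; exists v'; rewrite Ha Hb !eqxx.
by rewrite (NE _ _ _ _ Hu Hv Nab) (NE _ _ _ _ Hv Hw Nbm) (NE _ _ _ _ Hu Hw Nam).
Qed.

End Graph.

Section Zero.
Variables (R : realType) (V : finType) (p : nat) (sigma : V -> 'I_p) (E : rel V).
Hypothesis sinj : injective sigma.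
Local Notation F := (Esig sigma E).
Local Notation Fl := (Fill sigma E).

Lemma Lf_zero (x : 'I_p -> 'I_p -> R) D (a b : 'I_p) : (b < a)%N -> ~~ F a b -> ~~ Fl a b ->
  Lf F x D a b = 0.
Proof.
suff H : forall n (a b : 'I_p), (b < n)%N -> (b < a)%N -> ~~ F a b -> ~~ Fl a b ->
  Lf F x D a b = 0 by apply: H (ltnSn _).
elim=> [//|n IH] {}a {}b Hbn Hba NF NFl.
rewrite Lf_rec.
have -> : (a == b) = false by apply/negbTE; rewrite neq_ltn Hba orbT.
rewrite Hba (negbTE NF).
suff -> : \sum_(k < p | (k < b)%N) Lf F x D a k * D k * Lf F x D b k = 0
  by rewrite oppr0 mul0r.
apply: big1 => m Hm.
have nz : forall c : 'I_p, (m < c)%N -> Lf F x D c m != 0 -> Fl c m.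
  move=> c Hmc; apply: contraR => Nc.
  apply/eqP; apply: IH => //.
    by move: Hm Hbn; lia.
  by apply: contra Nc; apply: Esig_Fill.
have [Ha|Ha] := eqVneq (Lf F x D a m) 0; first by rewrite Ha !mul0r.
have [Hb|Hb] := eqVneq (Lf F x D b m) 0; first by rewrite Hb !mulr0.
by have := Fill_tri sinj Hm Hba (nz a (ltn_trans Hm Hba) Ha) (nz b Hm Hb); rewrite (negbTE NFl).
Qed.
End Zero.

Section Local.
Variables (R : realType) (p : nat) (F : rel 'I_p).

Lemma Lf_local (x x' : 'I_p -> 'I_p -> R) (D D' : 'I_p -> R) (n : nat) :
  (forall u v : 'I_p, (v < n)%N -> x u v = x' u v) ->
  (forall m : 'I_p, (m < n)%N -> D m = D' m) ->
  forall a b : 'I_p, (b < n)%N -> Lf F x D a b = Lf F x' D' a b.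
Proof.
move=> Hx HD.
suff H : forall k (a b : 'I_p), (b < k)%N -> (b < n)%N -> Lf F x D a b = Lf F x' D' a b
  by move=> a b Hb; apply: H (ltnSn _) Hb.
elim=> [//|k IH] {}a {}b Hbk Hbn.
rewrite (Lf_rec F x D a b) (Lf_rec F x' D' a b) Hx // HD //.
case: ifP => // _; case: ifP => // _; case: ifP => // _.
congr (- _ / _); apply: eq_bigr => m Hm.
rewrite !IH ?HD //; by move: Hm Hbk Hbn; lia.
Qed.

End Local.

Lemma detF_tri (R : realType) (T : finType) (M : T -> T -> R) (r : T -> nat) :
  injective r -> (forall a b, (r a < r b)%N -> M a b = 0) ->
  detF M = \prod_a M a a.
Proof.
move=> rinj Hz; rewrite /detF (bigD1 1%g) //= odd_perm1 expr0 mul1r.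
under eq_bigr do rewrite perm1.
rewrite [X in _ + X]big1 ?addr0 //.
move=> s Hs.
suff [a Ha] : exists a, (r a < r (s a))%N.
  by rewrite (bigD1 a) //= Hz ?mul0r ?mulr0.
case: (boolP [exists a, (r a < r (s a))%N]) => [/existsP //|/existsPn Hn]; exfalso.
have Hle : forall a, (r (s a) <= r a)%N by move=> a; rewrite leqNgt Hn.
move/eqP: Hs; apply; apply/permP => a; rewrite perm1.
apply: rinj; apply/eqP; rewrite eqn_leq Hle /=.
have Hsum : (\sum_b r (s b) = \sum_b r b)%N.
  by rewrite [RHS](reindex_inj (@perm_inj _ s)).
rewrite leqNgt; apply/negP => Hlt.
move: Hsum; rewrite (bigD1 a) //= [in RHS](bigD1 a) //=.
have : (\sum_(b | b != a) r (s b) <= \sum_(b | b != a) r b)%N by apply: leq_sum.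
lia.
Qed.

Lemma derive1_aff (R : realType) (c d x : R) : derive1 (fun s : R => s * c + d) x = c.
Proof.
rewrite derive1E.
have H := is_deriveD (is_deriveM (is_derive_id x (1:R)) (is_derive_cst c x (1:R))) (is_derive_cst d x (1:R)).
have E := @derive_val _ _ _ _ _ _ _ H.
transitivity ('D_1 ((id : R -> R) * cst c + cst d : R -> R) x); first by [].
by rewrite E scaler0 add0r addr0 /GRing.scale /= mulr1.
Qed.

Lemma derive1_const (R : realType) (g : R -> R) (c x : R) :
  (forall s, g s = c) -> derive1 g x = 0.
Proof. by move=> H; rewrite (funext H); exact: derive1_cst. Qed.

Section Jac.
Variables (R : realType) (V : finType) (p : nat) (sigma : V -> 'I_p) (E : rel V).
Local Notation F := (Esig sigma E).

Lemma Lf_local2 (x x' : 'I_p -> 'I_p -> R) (D D' : 'I_p -> R) (a b : 'I_p) :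
  (forall u v : 'I_p, (v < b)%N -> x u v = x' u v) -> x a b = x' a b ->
  (forall m : 'I_p, (m <= b)%N -> D m = D' m) ->
  Lf F x D a b = Lf F x' D' a b.
Proof.
move=> Hx Hab HD.
rewrite (Lf_rec F x D a b) (Lf_rec F x' D' a b) Hab HD //.
case: ifP => // _; case: ifP => // _; case: ifP => // _.
congr (- _ / _); apply: eq_bigr => m Hm.
rewrite HD ?(ltnW Hm) //.
have HD' : forall m0 : 'I_p, (m0 < b)%N -> D m0 = D' m0 by move=> m0 Hm0; apply: HD; rewrite ltnW.
by rewrite !(@Lf_local R p F x x' D D' b Hx HD').
Qed.

Lemma Dof_local (dt dt' : 'I_p -> R) (m : 'I_p) :
  (forall m' : 'I_p, (m' <= m)%N -> dt m' = dt' m') -> Dof dt m = Dof dt' m.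
Proof. by move=> H; apply: eq_bigr => m' Hm'; apply: H. Qed.

Lemma Lmat_E x (dt : 'I_p -> R) (i j : 'I_p) :
  Lmat sigma E x dt i j = Lf F x (Dof dt) i j.
Proof. by rewrite /Lmat mxE. Qed.

Lemma Omega_entry x (dt : 'I_p -> R) (a b : 'I_p) : Omega_of sigma E x dt a b =
  \sum_(m < p | (m <= b)%N) Lf F x (Dof dt) a m * Dof dt m * Lf F x (Dof dt) b m.
Proof.
rewrite /Omega_of mul_mx_diag !mxE (bigID (fun m : 'I_p => (m <= b)%N)) /=.
rewrite [X in _ + X]big1 ?addr0.
  by apply: eq_bigr => m _; rewrite !mxE.
move=> m; rewrite -ltnNge => Hm; rewrite !mxE.
by have := Lf_up F x (Dof dt) Hm; rewrite /Lf => ->; rewrite mulr0.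
Qed.

Definition Dprev (dt : 'I_p -> R) (k : 'I_p) := \prod_(m < p | (m < k)%N) dt m.

Lemma Dof_updD_lt (dt : 'I_p -> R) (k : 'I_p) s (m : 'I_p) : (m < k)%N ->
  Dof (updD dt k s) m = Dof dt m.
Proof.
move=> Hm; apply: Dof_local => m' Hm'; rewrite /updD.
by case: eqP => // E0; move: Hm Hm'; rewrite -E0; lia.
Qed.

Lemma Dof_updD_eq (dt : 'I_p -> R) (k : 'I_p) s : Dof (updD dt k s) k = s * Dprev dt k.
Proof.
rewrite /Dof (bigD1 k) //= /updD eqxx; congr (_ * _).
rewrite /Dprev; apply: eq_big => m.
  by rewrite ltn_neqAle andbC -val_eqE.
by move=> /andP [_ /negbTE ->].
Qed.

Lemma Lf_updD (x : 'I_p -> 'I_p -> R) dt (k : 'I_p) s (a b : 'I_p) : (b < k)%N ->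
  Lf F x (Dof (updD dt k s)) a b = Lf F x (Dof dt) a b.
Proof.
move=> Hb; apply: (@Lf_local R p F x x _ _ k) => // m Hm.
exact: Dof_updD_lt.
Qed.

Lemma Omega_updD (x : 'I_p -> 'I_p -> R) dt (k : 'I_p) s (a b : 'I_p) : (b < k)%N ->
  Omega_of sigma E x (updD dt k s) a b = Omega_of sigma E x dt a b.
Proof.
move=> Hb; rewrite !Omega_entry; apply: eq_bigr => m Hm.
have Hmk : (m < k)%N by apply: leq_ltn_trans Hm Hb.
by rewrite !Lf_updD // Dof_updD_lt.
Qed.

Lemma Lf_updL (x : 'I_p -> 'I_p -> R) D (i j : 'I_p) s (a b : 'I_p) : (b <= j)%N ->
  ~~ ((a == i) && (b == j)) ->
  Lf F (updL x i j s) D a b = Lf F x D a b.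
Proof.
move=> Hb Hab; apply: Lf_local2 => //.
  move=> u v Hv; rewrite /updL; case: (v =P j) => [E0|]; last by rewrite andbF.
  by move: Hv Hb; rewrite E0; lia.
by rewrite /updL (negbTE Hab).
Qed.

Lemma Omega_updL (x : 'I_p -> 'I_p -> R) dt (i j : 'I_p) s (a b : 'I_p) : (b <= j)%N ->
  ~~ ((a == i) && (b == j)) -> i != j ->
  Omega_of sigma E (updL x i j s) dt a b = Omega_of sigma E x dt a b.
Proof.
move=> Hb Hab Hij; rewrite !Omega_entry; apply: eq_bigr => m Hm.
have Hmj : (m <= j)%N := leq_trans Hm Hb.
have H1 : ~~ ((a == i) && (m == j)).
  apply/negP => /andP [/eqP Eai /eqP Emj]; move: Hab; rewrite Eai eqxx /=.
  by move: Hm Hb; rewrite Emj -val_eqE /=; lia.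
have H2 : ~~ ((b == i) && (m == j)).
  apply/negP => /andP [/eqP Ebi /eqP Emj]; move: Hm Hb Hij.
  rewrite Ebi Emj -val_eqE /=; lia.
by rewrite (Lf_updL _ _ _ Hmj H1) (Lf_updL _ _ _ Hmj H2).
Qed.

End Jac.

Section Jac2.
Variables (R : realType) (V : finType) (p : nat) (sigma : V -> 'I_p) (E : rel V).
Local Notation F := (Esig sigma E).
Local Notation AC := {c : Cidx p | active sigma E c}.

Definition rk (c : Cidx p) : nat :=
  match c with inl ij => (ij.2 * p.+1 + ij.1)%N | inr k => (k * p.+1)%N end.

Lemma rk_help (q a b a' b' : nat) : (b < q)%N -> (b' < q)%N ->
  (a * q + b = a' * q + b')%N -> a = a' /\ b = b'.
Proof.
move=> Hb Hb' H.
have Eb : b = b'.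
  by have := congr1 (modn^~ q) H; rewrite /= !modnMDl !modn_small.
subst b'; split => //; move/addIn: H => /eqP.
by rewrite eqn_pmul2r ?(leq_ltn_trans (leq0n _) Hb) // => /eqP.
Qed.

Lemma rk_inj : injective (fun a : AC => rk (val a)).
Proof.
have Hq : forall i : 'I_p, (i < p.+1)%N by move=> i; exact: ltnW (ltn_ord i).
move=> [[[i j]|k] Ha] [[[i' j']|k'] Hb] /= H; apply: val_inj => /=.
- have [Ej Ei] := rk_help (Hq i) (Hq i') H.
  by congr inl; congr pair; apply: val_inj.
- move: Ha => /andP [Hji _] /=; rewrite -[(k' * _)%N]addn0 in H.
  by have [_ E0] := rk_help (Hq i) (ltn0Sn _) H; move: Hji; rewrite E0.
- move: Hb => /andP [Hji _] /=; rewrite -[(k * _)%N]addn0 in H.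
  by have [_ E0] := rk_help (ltn0Sn _) (Hq i') H; move: Hji; rewrite -E0.
- rewrite -[(k * _)%N]addn0 -[(k' * _)%N]addn0 in H.
  by have [Ek _] := rk_help (ltn0Sn p) (ltn0Sn p) H; congr inr; apply: val_inj.
Qed.

Lemma jac_zero x dt (a b : AC) : (rk (val a) < rk (val b))%N ->
  @jac R V p sigma E (x, dt) a b = 0.
Proof.
rewrite /jac => H; apply: (derive1_const (c := out_val (Omega_of sigma E x dt) (val a))) => s.
move: a b H => [[[a1 a2]|k] Ha] [[[i j]|k'] Hb] /= H.
- move: Hb => /andP [Hji _].
  have Ha2 : (a2 <= j)%N by have := ltn_ord a1; have := ltn_ord i; move: H; nia.
  apply: Omega_updL => //.
    apply/negP => /andP [/eqP E1 /eqP E2]; move: H; rewrite E1 E2 ltnn //.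
  by rewrite neq_ltn Hji orbT.
- by apply: Omega_updD; have := ltn_ord a1; move: H; nia.
- move: Hb => /andP [Hji _].
  have Hk : (k <= j)%N by have := ltn_ord i; move: H; nia.
  apply: Omega_updL => //.
    by apply/negP => /andP [/eqP E1 /eqP E2]; move: Hji; rewrite -E1 E2 ltnn.
  by rewrite neq_ltn Hji orbT.
- by apply: Omega_updD; move: H; nia.
Qed.

Definition jdiag (dt : 'I_p -> R) (c : Cidx p) : R :=
  match c with inl ij => Dof dt ij.2 | inr k => Dprev dt k end.

Lemma jac_diag x dt (a : AC) : @jac R V p sigma E (x, dt) a a = jdiag dt (val a).
Proof.
rewrite /jac; move: a => [[[i j]|k] Ha] /=.
- move: Ha => /andP [Hji Fij] /=.
  set d := \sum_(m < p | (m < j)%N) Lf F x (Dof dt) i m * Dof dt m * Lf F x (Dof dt) j m.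
  rewrite -(derive1_aff (Dof dt j) d (x i j)); congr derive1; apply: funext => s.
  rewrite Omega_entry (bigD1 j) //= Lf_diag mulr1.
  have -> : Lf F (updL x i j s) (Dof dt) i j = s.
    rewrite Lf_rec Hji Fij /updL !eqxx.
    by have -> : (i == j) = false by apply/negbTE; rewrite neq_ltn Hji orbT.
  congr (_ + _); rewrite /d; apply: eq_big => m.
    by rewrite ltn_neqAle andbC -val_eqE.
  move=> /andP [Hm Hmj].
  have Hmj' : (m <= j)%N by [].
  have H1 : ~~ ((i == i) && (m == j)) by rewrite eqxx.
  have H2 : ~~ ((j == i) && (m == j)).
    by apply/negP => /andP [/eqP E1 _]; move: Hji; rewrite E1 ltnn.
  by rewrite Lf_updL // Lf_updL.
- set d := \sum_(m < p | (m < k)%N) Lf F x (Dof dt) k m * Dof dt m * Lf F x (Dof dt) k m.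
  rewrite -(derive1_aff (Dprev dt k) d (dt k)); congr derive1; apply: funext => s.
  rewrite Omega_entry (bigD1 k) //= Lf_diag mulr1 mul1r Dof_updD_eq.
  congr (_ + _); rewrite /d; apply: eq_big => m.
    by rewrite ltn_neqAle andbC -val_eqE.
  move=> /andP [Hm Hmk].
  have Hmk' : (m < k)%N by rewrite ltn_neqAle Hm andbT; exact: Hmk.
  by rewrite Lf_updD // Dof_updD_lt.
Qed.

Lemma det_jac x dt :
  detF (@jac R V p sigma E (x, dt)) = \prod_(a : AC) jdiag dt (val a).
Proof.
rewrite (detF_tri rk_inj); last exact: jac_zero.
by apply: eq_bigr => a _; rewrite jac_diag.
Qed.

End Jac2.


Section Tr.
Variables (R : realType) (V : finType) (p : nat) (sigma : V -> 'I_p) (E : rel V).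
Local Notation F := (Esig sigma E).

Definition qf (U : 'M[R]_p) (v : 'I_p -> R) : R :=
  \sum_a \sum_b v a * U b a * v b.
Definition bil (U : 'M[R]_p) (v w : 'I_p -> R) : R :=
  \sum_a \sum_b (v a * U b a * w b + w a * U b a * v b).

Lemma Omega_full x (dt : 'I_p -> R) (a b : 'I_p) : Omega_of sigma E x dt a b =
  \sum_m Lf F x (Dof dt) a m * Dof dt m * Lf F x (Dof dt) b m.
Proof. by rewrite /Omega_of mul_mx_diag !mxE; apply: eq_bigr => m _; rewrite !mxE. Qed.

Lemma trace_decomp x (dt : 'I_p -> R) (U : 'M[R]_p) :
  \tr (Omega_of sigma E x dt *m U) =
  \sum_m Dof dt m * qf U (fun a => Lf F x (Dof dt) a m).
Proof.
rewrite /mxtrace.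
under eq_bigr => a _ do rewrite mxE.
under eq_bigr => a _ do under eq_bigr => b _ do rewrite Omega_full mulr_suml.
under eq_bigr => a _ do rewrite exchange_big /=.
rewrite exchange_big /=; apply: eq_bigr => m _.
rewrite /qf mulr_sumr; apply: eq_bigr => a _.
rewrite mulr_sumr; apply: eq_bigr => b _; ring.
Qed.

Lemma qf_aff (U : 'M[R]_p) (al be : 'I_p -> R) (t : R) :
  qf U (fun a => al a + be a * t) = qf U al + t * bil U al be + t ^+ 2 * qf U be.
Proof.
rewrite /qf /bil !mulr_sumr -!big_split /=; apply: eq_bigr => a _.
rewrite !mulr_sumr -!big_split /=; apply: eq_bigr => b _; ring.
Qed.

Lemma qf_pos (U : 'M[R]_p) (v : 'I_p -> R) : posdef U -> (exists a, v a != 0) ->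
  0 < qf U v.
Proof.
move=> [HU Hpos] [a0 Ha0].
have Hw : (\col_a v a : 'cV[R]_p) != 0.
  by apply: contraNneq Ha0 => /matrixP /(_ a0 0); rewrite !mxE => ->.
have := Hpos _ Hw.
have -> : ((\col_a v a)^T *m U *m (\col_a v a)) 0 0 = qf U v.
  rewrite mxE /qf exchange_big /=; apply: eq_bigr => b _.
  rewrite [X in X * _]mxE mulr_suml; apply: eq_bigr => a _; rewrite !mxE.
  by move/matrixP: HU => /(_ a b); rewrite mxE => ->.
done.
Qed.

Lemma qf_ge0 (U : 'M[R]_p) (v : 'I_p -> R) : posdef U -> 0 <= qf U v.
Proof.
move=> HU; case: (boolP [exists a, v a != 0]) => [/existsP H|/existsPn H].
  exact/ltW/qf_pos.
rewrite /qf big1 // => a _; rewrite big1 // => b _.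
by have := H a; rewrite negbK => /eqP ->; rewrite !mul0r.
Qed.

End Tr.

Lemma aff_eval (R : realType) (f : R -> R) (A B : R) : (forall t, f t = A + B * t) ->
  (forall t, f t = f 0 + (f 1 - f 0) * t) /\ f 1 - f 0 = B.
Proof.
move=> H; have HB : f 1 - f 0 = B by rewrite !H; ring.
by split => // t; rewrite HB !H; ring.
Qed.

Section FormsI.
Variables (R : realType) (V : finType) (p : nat) (sigma : V -> 'I_p) (E : rel V).
Hypothesis sinj : injective sigma.
Hypothesis GB : GB_ordering sigma E.
Local Notation F := (Esig sigma E).
Local Notation Fl := (Fill sigma E).
Variables (x : 'I_p -> 'I_p -> R) (D : 'I_p -> R) (i0 j0 : 'I_p).
Hypothesis Hji0 : (j0 < i0)%N.
Hypothesis F0 : F i0 j0.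

Definition LI t := Lf F (updL x i0 j0 t) D.
Definition alI a b := LI 0 a b.
Definition beI a b := LI 1 a b - LI 0 a b.
Definition condI (a b : 'I_p) :=
  ((a == i0) && (b == j0)) || [&& ~~ F a b, Fl a b & (j0 < b)%N].

Lemma formsI_ex (a b : 'I_p) :
  (exists A B, (forall t, LI t a b = A + B * t) /\ (B != 0 -> condI a b)) ->
  (forall t, LI t a b = alI a b + beI a b * t) /\ (beI a b != 0 -> condI a b).
Proof.
move=> [A [B [H1 H2]]]; have [H3 H4] := aff_eval H1.
split; first exact: H3. by rewrite /beI H4.
Qed.

Lemma formsI (a b : 'I_p) :
  (forall t, LI t a b = alI a b + beI a b * t) /\ (beI a b != 0 -> condI a b).
Proof.
suff H : forall n (a b : 'I_p), (b < n)%N ->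
  (forall t, LI t a b = alI a b + beI a b * t) /\ (beI a b != 0 -> condI a b)
  by apply: (H b.+1).
elim=> [//|n IH] {}a {}b Hbn; apply: formsI_ex.
case: (eqVneq a b) => [->|Hab].
  by exists 1, 0; split => [t|]; rewrite ?eqxx // /LI Lf_diag mul0r addr0.
case: (ltnP b a) => Hba; last first.
  exists 0, 0; split => [t|]; rewrite ?eqxx // /LI Lf_up ?mul0r ?addr0 //.
  by rewrite ltn_neqAle Hba andbT; exact: Hab.
have Hrec := fun t => Lf_rec F (updL x i0 j0 t) D a b.
rewrite (negbTE Hab) Hba in Hrec.
case: (boolP (F a b)) => Fab.
  rewrite Fab in Hrec.
  case: (boolP ((a == i0) && (b == j0))) => Hc.
    exists 0, 1; split => [t|_]; last by rewrite /condI Hc.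
    by rewrite /LI; apply: (etrans (Hrec t)); rewrite /updL Hc add0r mul1r.
  exists (x a b), 0; split => [t|]; last by rewrite eqxx.
  by rewrite /LI; apply: (etrans (Hrec t)); rewrite /updL (negbTE Hc) mul0r addr0.
rewrite (negbTE Fab) in Hrec.
case: (boolP (Fl a b)) => Flab; last first.
  exists 0, 0; split => [t|]; rewrite ?eqxx // mul0r addr0.
  exact: (Lf_zero sinj).
have IHa := fun (m : 'I_p) (Hm : (m < b)%N) => IH a m (leq_trans Hm (Hbn : (b <= n)%N)).
have IHb := fun (m : 'I_p) (Hm : (m < b)%N) => IH b m (leq_trans Hm (Hbn : (b <= n)%N)).
have Hz : forall m : 'I_p, (m < b)%N -> beI a m * beI b m = 0.
  move=> m Hm; apply/eqP; rewrite mulf_eq0; apply/negPn/negP.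
  rewrite negb_or => /andP [/(proj2 (IHa m Hm)) Ca /(proj2 (IHb m Hm)) Cb].
  move: Ca Cb; rewrite /condI.
  case/orP => [/andP [/eqP Ea /eqP Em]|/and3P [Fam Flam Hjm]];
  case/orP => [/andP [/eqP Eb /eqP Em']|/and3P [Fbm Flbm Hjm']].
  - by move: Hba; rewrite Ea Eb ltnn.
  - by move: Hjm'; rewrite Em ltnn.
  - by move: Hjm; rewrite Em' ltnn.
  - exact: (GB_contra sinj GB Fab Fam Fbm Flab Flam Flbm).
set Bm := fun m : 'I_p => alI a m * D m * beI b m + beI a m * D m * alI b m.
exists (- (\sum_(m < p | (m < b)%N) alI a m * D m * alI b m) / D b),
       (- (\sum_(m < p | (m < b)%N) Bm m) / D b); split.
  move=> t; rewrite /LI; apply: (etrans (Hrec t)).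
  have -> : \sum_(m < p | (m < b)%N) Lf F (updL x i0 j0 t) D a m * D m * Lf F (updL x i0 j0 t) D b m
     = \sum_(m < p | (m < b)%N) (alI a m * D m * alI b m) + (\sum_(m < p | (m < b)%N) Bm m) * t.
    rewrite mulr_suml -big_split /=; apply: eq_bigr => m Hm.
    rewrite -/(LI t a m) -/(LI t b m) (proj1 (IHa m Hm)) (proj1 (IHb m Hm)).
    have := Hz m Hm; rewrite /Bm => Hzm.
    transitivity (alI a m * D m * alI b m + (alI a m * D m * beI b m + beI a m * D m * alI b m) * t
                  + (beI a m * beI b m) * D m * t ^+ 2); first by ring.
    by rewrite Hzm !mul0r addr0.
  by move: (\sum_(m < p | (m < b)%N) alI a m * D m * alI b m) (\sum_(m < p | (m < b)%N) Bm m) => S1 S2; ring.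
move=> HB.
have [m Hm HBm] : exists2 m : 'I_p, (m < b)%N & Bm m != 0.
  case: (boolP [exists m : 'I_p, (m < b)%N && (Bm m != 0)]) => [/existsP [m /andP [H1 H2]]|/existsPn Hn].
    by exists m.
  move: HB; rewrite big1 ?oppr0 ?mul0r ?eqxx // => m Hm.
  by have := Hn m; rewrite Hm /= negbK => /eqP.
have Hjm : (j0 <= m)%N.
  have [Ha0|Ha0] := eqVneq (beI a m) 0; last first.
    move: (proj2 (IHa m Hm) Ha0); rewrite /condI => /orP [/andP [_ /eqP ->]//|/and3P [_ _ H]].
    exact: ltnW.
  have [Hb0|Hb0] := eqVneq (beI b m) 0.
    by move: HBm; rewrite /Bm Ha0 Hb0 !mulr0 !mul0r addr0 eqxx.
  move: (proj2 (IHb m Hm) Hb0); rewrite /condI => /orP [/andP [_ /eqP ->]//|/and3P [_ _ H]].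
  exact: ltnW.
by rewrite /condI Fab Flab (leq_ltn_trans Hjm Hm) orbT.
Qed.

End FormsI.

Lemma inv_eval (R : realType) (f : R -> R) (A B : R) :
  (forall t : R, t != 0 -> f t = A + B * t^-1) ->
  (forall t : R, t != 0 -> f t = (2 * f 1 - f 2^-1) + (f 2^-1 - f 1) * t^-1) /\ f 2^-1 - f 1 = B.
Proof.
move=> H.
have h2 : (2^-1 : R) != 0 by rewrite invr_eq0.
have E1 : f 1 = A + B by rewrite H ?oner_neq0 // invr1 mulr1.
have E2 : f 2^-1 = A + B * 2 by rewrite H // invrK.
have HB : f 2^-1 - f 1 = B by rewrite E1 E2; ring.
split => // t Ht; rewrite HB H // E1 E2; congr (_ + _); ring.
Qed.

Section FormsII.
Variables (R : realType) (V : finType) (p : nat) (sigma : V -> 'I_p) (E : rel V).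
Hypothesis sinj : injective sigma.
Hypothesis GB : GB_ordering sigma E.
Local Notation F := (Esig sigma E).
Local Notation Fl := (Fill sigma E).
Variables (x : 'I_p -> 'I_p -> R) (dt : 'I_p -> R) (k : 'I_p).
Hypothesis Hdt : forall k', k' != k -> 0 < dt k'.

Definition cD (m : 'I_p) := \prod_(m' < p | (m' <= m)%N && (m' != k)) dt m'.

Lemma cD_gt0 m : 0 < cD m.
Proof. by apply: prodr_gt0 => m' /andP [_ H]; apply: Hdt. Qed.

Lemma Dof_split t (m : 'I_p) : Dof (updD dt k t) m = (if (k <= m)%N then t else 1) * cD m.
Proof.
rewrite /Dof /cD; case: ifP => Hkm.
  rewrite (bigD1 k) //= /updD eqxx; congr (_ * _); apply: eq_bigr => m' /andP [_ H].
  by rewrite (negbTE H).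
rewrite mul1r; apply: eq_big => m'.
  case: (eqVneq m' k) => [->|_]; last by rewrite andbT.
  by rewrite Hkm.
move=> Hm'; rewrite /updD; case: eqP => // E0; by move: Hkm Hm'; rewrite E0 => ->.
Qed.

Definition LII t := Lf F x (Dof (updD dt k t)).
Definition alII a b := 2 * LII 1 a b - LII 2^-1 a b.
Definition beII a b := LII 2^-1 a b - LII 1 a b.
Definition condII (a b : 'I_p) := [&& ~~ F a b, Fl a b & (k <= b)%N].

Lemma formsII_ex (a b : 'I_p) :
  (exists A B, (forall t : R, t != 0 -> LII t a b = A + B * t^-1) /\ (B != 0 -> condII a b)) ->
  (forall t : R, t != 0 -> LII t a b = alII a b + beII a b * t^-1) /\ (beII a b != 0 -> condII a b).
Proof.
move=> [A [B [H1 H2]]]; have [H3 H4] := inv_eval H1.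
split; first exact: H3. by rewrite /beII H4.
Qed.

Lemma formsII (a b : 'I_p) :
  (forall t : R, t != 0 -> LII t a b = alII a b + beII a b * t^-1) /\ (beII a b != 0 -> condII a b).
Proof.
suff H : forall n (a b : 'I_p), (b < n)%N ->
  (forall t : R, t != 0 -> LII t a b = alII a b + beII a b * t^-1) /\ (beII a b != 0 -> condII a b)
  by apply: (H b.+1).
elim=> [//|n IH] {}a {}b Hbn; apply: formsII_ex.
case: (eqVneq a b) => [->|Hab].
  by exists 1, 0; split => [t _|]; rewrite ?eqxx // /LII Lf_diag mul0r addr0.
case: (ltnP b a) => Hba; last first.
  exists 0, 0; split => [t _|]; rewrite ?eqxx // /LII Lf_up ?mul0r ?addr0 //.
  by rewrite ltn_neqAle Hba andbT; exact: Hab.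
have Hrec := fun t => Lf_rec F x (Dof (updD dt k t)) a b.
rewrite (negbTE Hab) Hba in Hrec.
case: (boolP (F a b)) => Fab.
  rewrite Fab in Hrec.
  exists (x a b), 0; split => [t _|]; last by rewrite eqxx.
  by rewrite /LII; apply: (etrans (Hrec t)); rewrite mul0r addr0.
rewrite (negbTE Fab) in Hrec.
case: (boolP (Fl a b)) => Flab; last first.
  exists 0, 0; split => [t _|]; rewrite ?eqxx // mul0r addr0.
  exact: (Lf_zero sinj).
have IHa := fun (m : 'I_p) (Hm : (m < b)%N) => IH a m (leq_trans Hm (Hbn : (b <= n)%N)).
have IHb := fun (m : 'I_p) (Hm : (m < b)%N) => IH b m (leq_trans Hm (Hbn : (b <= n)%N)).
have Hc0 : forall (c m : 'I_p) (Hm : (m < b)%N), (c = a \/ c = b) -> (m < k)%N -> beII c m = 0.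
  move=> c m Hm Hc Hmk; apply/eqP; apply/negPn/negP => Hne.
  have : condII c m by case: Hc => Ec; subst c; [exact: (proj2 (IHa m Hm) Hne) | exact: (proj2 (IHb m Hm) Hne)].
  by case/and3P => _ _; rewrite leqNgt Hmk.
have Hz : forall m : 'I_p, (m < b)%N -> beII a m * beII b m = 0.
  move=> m Hm; apply/eqP; rewrite mulf_eq0; apply/negPn/negP.
  rewrite negb_or => /andP [/(proj2 (IHa m Hm)) Ca /(proj2 (IHb m Hm)) Cb].
  move: Ca Cb => /and3P [Fam Flam _] /and3P [Fbm Flbm _].
  exact: (GB_contra sinj GB Fab Fam Fbm Flab Flam Flbm).
case: (ltnP b k) => Hbk.
  exists (- (\sum_(m < p | (m < b)%N) alII a m * cD m * alII b m) / cD b), 0.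
  split; last by rewrite eqxx.
  move=> t Ht; rewrite mul0r addr0 /LII; apply: (etrans (Hrec t)).
  rewrite Dof_split leqNgt Hbk mul1r; congr (- _ / _); apply: eq_bigr => m Hm.
  have Hmk : (m < k)%N := ltn_trans Hm Hbk.
  rewrite -/(LII t a m) -/(LII t b m) (proj1 (IHa m Hm) t Ht) (proj1 (IHb m Hm) t Ht).
  rewrite (Hc0 a m Hm (or_introl erefl) Hmk) (Hc0 b m Hm (or_intror erefl) Hmk) !mul0r !addr0.
  by rewrite Dof_split leqNgt Hmk mul1r.
set T1 := fun m : 'I_p => if (k <= m)%N then cD m * alII a m * alII b m else 0.
set T0 := fun m : 'I_p => if (k <= m)%N then cD m * (alII a m * beII b m + beII a m * alII b m)
                          else alII a m * cD m * alII b m.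
exists (- (\sum_(m < p | (m < b)%N) T1 m) / cD b), (- (\sum_(m < p | (m < b)%N) T0 m) / cD b).
split; last by move=> _; rewrite /condII Fab Flab Hbk.
move=> t Ht; rewrite /LII; apply: (etrans (Hrec t)).
have -> : \sum_(m < p | (m < b)%N) Lf F x (Dof (updD dt k t)) a m * Dof (updD dt k t) m *
            Lf F x (Dof (updD dt k t)) b m
   = (\sum_(m < p | (m < b)%N) T1 m) * t + \sum_(m < p | (m < b)%N) T0 m.
  rewrite mulr_suml -big_split /=; apply: eq_bigr => m Hm.
  rewrite -/(LII t a m) -/(LII t b m) (proj1 (IHa m Hm) t Ht) (proj1 (IHb m Hm) t Ht).
  rewrite Dof_split /T1 /T0; case: ifP => Hkm.
    have Hzm := Hz m Hm.
    transitivity (cD m * alII a m * alII b m * t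
       + cD m * (alII a m * beII b m + beII a m * alII b m) * (t * t^-1)
       + cD m * (beII a m * beII b m) * (t * t^-1 ^+ 2)); first by move: (t^-1) => s; ring.
    by rewrite Hzm mulfV // !mulr0 mul0r mulr1 addr0.
  have Hmk : (m < k)%N by rewrite ltnNge Hkm.
  rewrite (Hc0 a m Hm (or_introl erefl) Hmk) (Hc0 b m Hm (or_intror erefl) Hmk).
  by move: (t^-1) => s; ring.
rewrite Dof_split Hbk.
have := cD_gt0 b; rewrite lt0r => /andP [Hc _].
move: (\sum_(m < p | (m < b)%N) T1 m) (\sum_(m < p | (m < b)%N) T0 m) => S1 S0.
by field; rewrite Ht Hc.
Qed.

End FormsII.


Lemma powR_sum (R : realType) (I : Type) (r : seq I) (P : pred I) (e : I -> R) (t : R) :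
  0 < t -> t `^ (\sum_(i <- r | P i) e i) = \prod_(i <- r | P i) t `^ e i.
Proof.
move=> Ht; apply: (big_rec2 (fun a b => t `^ a = b)) => [|i a b _ <-].
  exact: powRr0.
by rewrite powRD //; apply/implyP => _; rewrite gt_eqF.
Qed.

Lemma sum_ge_term (R : realType) (I : finType) (F : I -> R) (i0 : I) :
  (forall i, 0 <= F i) -> F i0 <= \sum_i F i.
Proof.
move=> H; rewrite (bigD1 i0) //=; apply: ler_wpDr => //.
by apply: sumr_ge0 => i _.
Qed.

Lemma Dof_gt0 (R : realType) (p : nat) (dt : 'I_p -> R) m : (forall k, 0 < dt k) -> 0 < Dof dt m.
Proof. by move=> H; apply: prodr_gt0 => k _. Qed.

Lemma Dprev_gt0 (R : realType) (p : nat) (dt : 'I_p -> R) m : (forall k, 0 < dt k) -> 0 < Dprev dt m.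
Proof. by move=> H; apply: prodr_gt0 => k _. Qed.

Lemma part1 (R : realType) (p : nat) (V : finType) (E : rel V)
  (sigma : V -> 'I_p) (U : 'M[R]_p) (delta : 'I_p -> R) :
  injective sigma -> GB_ordering sigma E -> posdef U ->
  (forall i j : 'I_p, freeL sigma E i j ->
     forall (x : 'I_p -> 'I_p -> R) (dt : 'I_p -> R), (forall k, 0 < dt k) ->
     exists mu s C : R, 0 < s /\ 0 < C /\
       forall t : R,
         gw_density sigma E U delta (updL x i j t, dt)
         = C * expR (- (t - mu) ^+ 2 / (2 * s))).
Proof.
move=> sinj GB HU i j /andP [Hji Fij] x dt Hdt.
set D := Dof dt.
have HD : forall m, 0 < D m by move=> m; exact: Dof_gt0.
set J := \prod_(a : {c : Cidx p | active sigma E c}) jdiag dt (val a).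
have HJ : 0 < J.
  apply: prodr_gt0 => -[[ij|k'] _] _ /=; [exact: Dof_gt0 | exact: Dprev_gt0].
set P := \prod_(k < p) Dof dt k `^ (delta k / 2).
have HP : 0 < P by apply: prodr_gt0 => k _; apply: powR_gt0; exact: Dof_gt0.

pose al m := fun a => alI sigma E x D i j a m.
pose be m := fun a => beI sigma E x D i j a m.
pose K0 := \sum_m D m * qf U (al m).
pose K1 := \sum_m D m * bil U (al m) (be m).
pose K2 := \sum_m D m * qf U (be m).
have Htr : forall t, \tr (Omega_of sigma E (updL x i j t) dt *m U) = K0 + K1 * t + K2 * t ^+ 2.
  move=> t; rewrite trace_decomp.
  have -> : \sum_m Dof dt m * qf U (fun a => Lf (Esig sigma E) (updL x i j t) (Dof dt) a m)
     = \sum_m (D m * qf U (al m) + D m * bil U (al m) (be m) * t + D m * qf U (be m) * t ^+ 2).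
    apply: eq_bigr => m _.
    have -> : (fun a => Lf (Esig sigma E) (updL x i j t) (Dof dt) a m) = (fun a => al m a + be m a * t).
      by apply: funext => a; exact: (proj1 (formsI sinj GB x D i j a m) t).
    by rewrite qf_aff /D; ring.
  by rewrite !big_split /= -!mulr_suml.
have Hbe : be j i = 1.
  rewrite /be /beI /LI.
  have H : forall t, Lf (Esig sigma E) (updL x i j t) D i j = t.
    move=> t; rewrite Lf_rec Hji Fij /updL !eqxx.
    by have -> : (i == j) = false by apply/negbTE; rewrite neq_ltn Hji orbT.
  by rewrite !H subr0.
have HK2 : 0 < K2.
  have Hnn : forall m, 0 <= D m * qf U (be m).
    by move=> m; apply: mulr_ge0; [exact: ltW | exact: qf_ge0].
  apply: (lt_le_trans _ (sum_ge_term (F := fun m => D m * qf U (be m)) j Hnn)).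
  by apply: mulr_gt0 => //; apply: qf_pos => //; exists i; rewrite Hbe oner_neq0.
exists (- K1 / (2 * K2)), K2^-1, (P * expR (- K0 / 2 + K1 ^+ 2 / (8 * K2)) * J).
split; first by rewrite invr_gt0.
split; first by rewrite !mulr_gt0 // expR_gt0.
move=> t; rewrite /gw_density /= Htr det_jac ger0_norm ?(ltW HJ) //.
have HK2' : K2 != 0 by rewrite gt_eqF.
have Ee : - (K0 + K1 * t + K2 * t ^+ 2) / 2 =
   (- K0 / 2 + K1 ^+ 2 / (8 * K2)) + (- (t - (- K1 / (2 * K2))) ^+ 2 / (2 * K2^-1)).
  by field.
rewrite Ee expRD /P /J; ring.
Qed.


Lemma part2 (R : realType) (p : nat) (V : finType) (E : rel V)
  (sigma : V -> 'I_p) (U : 'M[R]_p) (delta : 'I_p -> R) :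
  injective sigma -> GB_ordering sigma E -> posdef U -> (forall i, 0 < delta i) ->
  (forall k : 'I_p,
     forall (x : 'I_p -> 'I_p -> R) (dt : 'I_p -> R),
     (forall k', k' != k -> 0 < dt k') ->
     exists alpha C : R, 0 < C /\
       ((exists a b : R, 0 < a /\ 0 < b /\
           forall t : R, 0 < t ->
             gw_density sigma E U delta (x, updD dt k t)
             = C * t `^ alpha * expR (- (a * t) - b / t))
        \/
        (-1 < alpha /\ exists a : R, 0 < a /\
           forall t : R, 0 < t ->
             gw_density sigma E U delta (x, updD dt k t)
             = C * t `^ alpha * expR (- (a * t))))).
Proof.
move=> sinj GB HU Hdel k x dt Hdt.
pose al m := fun a => alII sigma E x dt k a m.
pose be m := fun a => beII sigma E x dt k a m.
have HbeZ : forall (m a : 'I_p), (m < k)%N -> be m a = 0.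
  move=> m a Hmk; apply/eqP; apply/negPn/negP => /(proj2 (formsII sinj GB x Hdt a m)).
  by case/and3P => _ _; rewrite leqNgt Hmk.
have Hcol : forall (t : R) (m : 'I_p), t != 0 -> (fun a => Lf (Esig sigma E) x (Dof (updD dt k t)) a m) =
   (fun a => al m a + be m a * t^-1).
  by move=> t m Ht; apply: funext => a; exact: (proj1 (formsII sinj GB x Hdt a m) t Ht).
pose cd := cD dt k.
pose A := \sum_(m < p) (if (k <= m)%N then cd m * qf U (al m) else 0).
pose B := \sum_(m < p) (if (k <= m)%N then cd m * qf U (be m) else 0).
pose C0 := \sum_(m < p) (if (k <= m)%N then cd m * bil U (al m) (be m) else cd m * qf U (al m)).
have Htr : forall t, 0 < t ->
  \tr (Omega_of sigma E x (updD dt k t) *m U) = A * t + C0 + B * t^-1.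
  move=> t Ht; have Ht0 : t != 0 by rewrite gt_eqF.
  rewrite trace_decomp /A /B /C0 !mulr_suml -!big_split /=; apply: eq_bigr => m _.
  rewrite Dof_split (Hcol t m Ht0) /cd; case: ifP => Hkm.
    by rewrite qf_aff; field.
  have Hmk : (m < k)%N by rewrite ltnNge Hkm.
  have -> : (fun a => al m a + be m a * t^-1) = al m.
    by apply: funext => a; rewrite (HbeZ m a Hmk) mul0r addr0.
  by rewrite !mul0r add0r addr0 mul1r.
have Hcd : forall m, 0 < cd m by move=> m; exact: cD_gt0.
have HA : 0 < A.
  have Hnn : forall m : 'I_p, 0 <= (if (k <= m)%N then cd m * qf U (al m) else 0).
    move=> m; case: ifP => // _; apply: mulr_ge0; [exact: ltW | exact: qf_ge0].
  apply: (lt_le_trans _ (sum_ge_term (F := fun m : 'I_p => if (k <= m)%N then cd m * qf U (al m) else 0) k Hnn)).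
  rewrite /= leqnn; apply: mulr_gt0 => //; apply: qf_pos => //; exists k.
  by rewrite /al /alII /LII !Lf_diag mulr1 (_ : 2 - 1 = 1 :> R) ?oner_neq0 //; ring.
have HB : 0 <= B.
  apply: sumr_ge0 => m _; case: ifP => // _; apply: mulr_ge0; [exact: ltW | exact: qf_ge0].
pose sd := \sum_(m < p) (if (k <= m)%N then delta m / 2 else 0).
pose Pc := \prod_(m < p) cd m `^ (delta m / 2).
have Hpre : forall t, 0 < t ->
  \prod_(m < p) Dof (updD dt k t) m `^ (delta m / 2) = t `^ sd * Pc.
  move=> t Ht; rewrite /sd /Pc powR_sum // -big_split /=; apply: eq_bigr => m _.
  rewrite Dof_split powRM; last exact: ltW.
    by case: ifP => _ //; rewrite powRr0 powR1.
  by case: ifP => _; [exact: ltW | exact: ler01].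
pose cP (k' : 'I_p) := \prod_(m < p | (m < k')%N && (m != k)) dt m.
have HcP : forall k', 0 < cP k'.
  by move=> k'; apply: prodr_gt0 => m /andP [_ H]; apply: Hdt.
pose je (c : Cidx p) : R := match c with inl ij => if (k <= ij.2)%N then 1 else 0
                                     | inr k' => if (k < k')%N then 1 else 0 end.
pose jg (c : Cidx p) : R := match c with inl ij => cd ij.2 | inr k' => cP k' end.
have Hjd : forall t c, 0 < t -> jdiag (updD dt k t) c = t `^ (je c) * jg c.
  move=> t [[i j]|k'] Ht /=.
    by rewrite Dof_split; case: ifP => _; rewrite ?powRr1 ?powRr0 // ltW.
  rewrite /Dprev /cP; case: ifP => Hkk.
    rewrite powRr1 ?ltW // (bigD1 k) //= /updD eqxx; congr (_ * _).
    by apply: eq_bigr => m /andP [_ H]; rewrite (negbTE H).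
  rewrite powRr0 mul1r; apply: eq_big => m.
    case: (eqVneq m k) => [->|]; last by rewrite andbT.
    by rewrite Hkk.
  move=> Hm; rewrite /updD; case: eqP => // E0.
  by move: Hkk Hm; rewrite E0 => ->.
pose N := \sum_(a : {c : Cidx p | active sigma E c}) je (val a).
pose G := \prod_(a : {c : Cidx p | active sigma E c}) jg (val a).
have HG : 0 < G by apply: prodr_gt0 => -[[ij|k'] _] _ /=.
have HN : 0 <= N by apply: sumr_ge0 => -[[[i j]|k'] _] _ /=; case: ifP.
have Hjac : forall t, 0 < t ->
  \prod_(a : {c : Cidx p | active sigma E c}) jdiag (updD dt k t) (val a) = t `^ N * G.
  move=> t Ht; rewrite /N /G powR_sum // -big_split /=.
  by apply: eq_bigr => a _; rewrite Hjd.
have Hdens : forall t, 0 < t -> gw_density sigma E U delta (x, updD dt k t) =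
    (t `^ sd * Pc) * expR (- (A * t + C0 + B * t^-1) / 2) * (t `^ N * G).
  move=> t Ht; rewrite /gw_density /= Hpre // Htr // det_jac Hjac // ger0_norm //.
  by apply: mulr_ge0; [exact: powR_ge0 | exact: ltW].
have Hsd : 0 < sd.
  have Hnn : forall m : 'I_p, 0 <= (if (k <= m)%N then delta m / 2 else 0).
    by move=> m; case: ifP => // _; apply: divr_ge0; [exact: ltW | exact: ler0n].
  apply: (lt_le_trans _ (sum_ge_term (F := fun m : 'I_p => if (k <= m)%N then delta m / 2 else 0) k Hnn)).
  by rewrite /= leqnn; apply: divr_gt0.
have HPc : 0 < Pc by apply: prodr_gt0 => m _; apply: powR_gt0.
have HC : 0 < Pc * G * expR (- C0 / 2) by rewrite !mulr_gt0 // expR_gt0.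
have HpowD : forall t, 0 < t -> t `^ (sd + N) = t `^ sd * t `^ N.
  by move=> t Ht; rewrite powRD //; apply/implyP => _; rewrite gt_eqF.
exists (sd + N), (Pc * G * expR (- C0 / 2)); split => //.
case: (eqVneq B 0) => HB0.
  right; split; first by lra.
  exists (A / 2); split; first by apply: divr_gt0.
  move=> t Ht; rewrite Hdens // HpowD // HB0.
  have Ee : - (A * t + C0 + 0 * t^-1) / 2 = - C0 / 2 + - (A / 2 * t) by ring.
  by rewrite Ee expRD; ring.
left; exists (A / 2), (B / 2); split; first by apply: divr_gt0.
have HB' : 0 < B by rewrite lt_neqAle eq_sym HB0.
split; first by apply: divr_gt0.
move=> t Ht; rewrite Hdens // HpowD //.
have Ee : - (A * t + C0 + B * t^-1) / 2 = - C0 / 2 + (- (A / 2 * t) - B / 2 / t) by ring.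
by rewrite Ee expRD; ring.
Qed.


End Helpers.
Import Helpers.

Theorem theorem3 (R : realType) (p : nat) (V : finType) (E : rel V)
  (sigma : V -> 'I_p) (U : 'M[R]_p) (delta : 'I_p -> R) :
  #|V| = p -> symmetric E -> irreflexive E ->
  GB_graph p E -> bijective sigma -> GB_ordering sigma E ->
  posdef U -> (forall i, 0 < delta i) ->
  (* (i) full conditionals of the independent entries L_ij are normal *)
  (forall i j : 'I_p, freeL sigma E i j ->
     forall (x : 'I_p -> 'I_p -> R) (dt : 'I_p -> R), (forall k, 0 < dt k) ->
     exists mu s C : R, 0 < s /\ 0 < C /\
       forall t : R,
         gw_density sigma E U delta (updL x i j t, dt)
         = C * expR (- (t - mu) ^+ 2 / (2 * s)))
  /\
  (* (ii) full conditionals of Dtilde_k are GIG or Gamma *)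
  (forall k : 'I_p,
     forall (x : 'I_p -> 'I_p -> R) (dt : 'I_p -> R),
     (forall k', k' != k -> 0 < dt k') ->
     exists alpha C : R, 0 < C /\
       ((exists a b : R, 0 < a /\ 0 < b /\
           forall t : R, 0 < t ->
             gw_density sigma E U delta (x, updD dt k t)
             = C * t `^ alpha * expR (- (a * t) - b / t))
        \/
        (-1 < alpha /\ exists a : R, 0 < a /\
           forall t : R, 0 < t ->
             gw_density sigma E U delta (x, updD dt k t)
             = C * t `^ alpha * expR (- (a * t))))).
Proof.
move=> HV Hsym Hirr HGB Hbij HGBo HU Hdel.
have sinj := bij_inj Hbij.
split; [exact: part1 | exact: part2].
Qed.
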